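(* Let $A$ and $B$ be automata and let $(b,n)$ be a normed backward simulation from $A$ to $B$. Then (1) $[A,B]\in b$, i.e., every finite execution of $A$ is $b$-related to some finite execution of $B$; (2) if moreover $b$ is image-finite (i.e., $b[s]$ is finite for every $s\in\mathrm{states}(A)$), then $(A,B)\in b$, i.e., every execution of $A$ is $b$-related to some execution of $B$.
   Context: An automaton $A$ consists of a set $\mathrm{states}(A)$ of states, a nonempty set $\mathrm{start}(A)\subseteq\mathrm{states}(A)$ of start states, a set $\mathrm{acts}(A)$ of actions containing a distinguished internal action $\tau$, and a set $\mathrm{steps}(A)\subseteq\mathrm{states}(A)\times\mathrm{acts}(A)\times\mathrm{states}(A)$ of steps; write $s\xrightarrow{a}_A t$ for $(s,a,t)\in\mathrm{steps}(A)$. An execution fragment of $A$ is a finite or infinite alternating sequence $s_0a_1s_1a_2s_2\cdots$ of states and actions, beginning with a state and, if finite, ending with a state, such that $s_{i-1}\xrightarrow{a_i}_A s_i$ for all $i>0$; its index set $\mathrm{Index}(\alpha)$ is the set of indices $i$ of its states $s_i$. An execution is an execution fragment whose first state is a start state. For a relation $R$ write $R[s]=\{u\mid (s,u)\in R\}$. Execution correspondence: Let $R\subseteq\mathrm{states}(A)\times\mathrm{states}(B)$ and let $\alpha=s_0a_1s_1\cdots$ and $\alpha'=u_0b_1u_1\cdots$ be execution fragments of $A$ and $B$. An index relation over $R$ between $\alpha$ and $\alpha'$ is a relation $I\subseteq\mathrm{Index}(\alpha)\times\mathrm{Index}(\alpha')$ such that (1) $(i,j)\in I$ implies $(s_i,u_j)\in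 R$; (2) $(i,j)\in I$, $(i',j')\in I$ and $i<i'$ imply $j\le j'$; (3) every index of $\alpha$ is related by $I$ to some index of $\alpha'$ and every index of $\alpha'$ is related by $I$ to some index of $\alpha$; (4) if $(i,j),(i+1,j+1)\in I$ then $a_{i+1}=b_{j+1}$; if $(i,j),(i+1,j)\in I$ then $a_{i+1}=\tau$; if $(i,j),(i,j+1)\in I$ then $b_{j+1}=\tau$. The fragments $\alpha,\alpha'$ are $R$-related, written $(\alpha,\alpha')\in R$, if such an $I$ exists. Write $(A,B)\in R$ if every execution of $A$ is $R$-related to some execution of $B$, and $[A,B]\in R$ if every finite execution of $A$ is $R$-related to some finite execution of $B$. A normed backward simulation from $A$ to $B$ is a pair $(b,n)$ where $b\subseteq\mathrm{states}(A)\times\mathrm{states}(B)$ is total (every $s\in\mathrm{states}(A)$ has $b[s]\neq\emptyset$) and $n:(\mathrm{steps}(A)\cup\mathrm{start}(A))\times\mathrm{states}(B)\to S$ for some set $S$ with a well-founded strict order $<$, such that: (1) if $s\in\mathrm{start}(A)$ and $u\in b[s]$ then (a) $u\in\mathrm{start}(B)$, or (b) there is $v\in b[s]$ with $v\xrightarrow{\tau}_B u$ and $n(s,v)<n(s,u)$; (2) if $t\xrightarrow{a}_A s$ and $u\in b[s]$ then (a) $u\in b[t]$ and $a=\tau$, or (b) there is $v\in b[t]$ with $v\xrightarrow{a}_B u$, or (c) there is $v\in b[s]$ with $v\xrightarrow{\tau}_B u$ and $n(t\xrightarrow{a}s,v)<n(t\xrightarrow{a}s,u)$. *)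

(* Defs.v *)
From Stdlib Require Import List Relations Wellfounded.



Record automaton (Act : Type) (tau : Act) : Type := {
  state : Type;
  start : state -> Prop;
  start_nonempty : exists s, start s;
  step : state -> Act -> state -> Prop
}.

Arguments automaton {Act} _.
Arguments state {Act tau} _.
Arguments start {Act tau} _ _.
Arguments step {Act tau} _ _ _ _.

(* A (finite or infinite) alternating sequence s_0 a_1 s_1 a_2 s_2 ...
   [fst i] = s_i, [fact i] = a_i (for i >= 1; [fact 0] is irrelevant),
   [flen = Some k]: finite, indices 0..k ; [flen = None]: infinite. *)
Record frag (Act X : Type) : Type := {
  fst : nat -> X;
  fact : nat -> Act;
  flen : option nat
}.

Arguments fst {Act X} _ _.
Arguments Build_frag {Act X} _ _ _.
Arguments fact {Act X} _ _.
Arguments flen {Act X} _.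

Definition Index {Act X : Type} (al : frag Act X) (i : nat) : Prop :=
  match flen al with
  | Some k => i <= k
  | None => True
  end.

Definition is_finite {Act X : Type} (al : frag Act X) : Prop :=
  exists k, flen al = Some k.

Definition exec_fragment {Act : Type} {tau : Act} (A : automaton tau)
  (al : frag Act (state A)) : Prop :=
  forall i, Index al (S i) -> step A (fst al i) (fact al (S i)) (fst al (S i)).

Definition execution {Act : Type} {tau : Act} (A : automaton tau)
  (al : frag Act (state A)) : Prop :=
  exec_fragment A al /\ start A (fst al 0).

Definition index_relation {Act : Type} {tau : Act} {A B : automaton tau}
  (R : state A -> state B -> Prop)
  (al : frag Act (state A)) (al' : frag Act (state B))
  (I : nat -> nat -> Prop) : Prop :=
  (forall i j, I i j -> Index al i /\ Index al' j) /\
  (forall i j, I i j -> R (fst al i) (fst al' j)) /\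
  (forall i j i' j', I i j -> I i' j' -> i < i' -> j <= j') /\
  (forall i, Index al i -> exists j, I i j) /\
  (forall j, Index al' j -> exists i, I i j) /\
  (forall i j, I i j -> I (S i) (S j) -> fact al (S i) = fact al' (S j)) /\
  (forall i j, I i j -> I (S i) j -> fact al (S i) = tau) /\
  (forall i j, I i j -> I i (S j) -> fact al' (S j) = tau).

Definition R_related {Act : Type} {tau : Act} {A B : automaton tau}
  (R : state A -> state B -> Prop)
  (al : frag Act (state A)) (al' : frag Act (state B)) : Prop :=
  exists I, index_relation R al al' I.

Definition exec_corr {Act : Type} {tau : Act} (A B : automaton tau)
  (R : state A -> state B -> Prop) : Prop :=
  forall al, execution A al ->
    exists al', execution B al' /\ R_related R al al'.

Definition fin_exec_corr {Act : Type} {tau : Act} (A B : automaton tau)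
  (R : state A -> state B -> Prop) : Prop :=
  forall al, execution A al -> is_finite al ->
    exists al', execution B al' /\ is_finite al' /\ R_related R al al'.

Definition norm_dom {Act : Type} {tau : Act} (A : automaton tau) : Type :=
  ({ s : state A | start A s } +
   { x : state A * Act * state A |
       let '(t, a, s) := x in step A t a s })%type.

Definition strict_wf_order {S : Type} (lt : S -> S -> Prop) : Prop :=
  (forall x, ~ lt x x) /\ (forall x y z, lt x y -> lt y z -> lt x z) /\
  well_founded lt.

Definition normed_backward_simulation {Act : Type} {tau : Act}
  (A B : automaton tau) (b : state A -> state B -> Prop)
  (S : Type) (lt : S -> S -> Prop) (n : norm_dom A -> state B -> S) : Prop :=
  strict_wf_order lt /\
  (forall s : state A, exists u, b s u) /\
  (forall (s : state A) (Hs : start A s) (u : state B), b s u ->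
     start B u \/
     exists v, b s v /\ step B v tau u /\
       lt (n (inl (exist _ s Hs)) v) (n (inl (exist _ s Hs)) u)) /\
  (forall (t : state A) (a : Act) (s : state A) (H : step A t a s) (u : state B),
     b s u ->
     (b t u /\ a = tau) \/
     (exists v, b t v /\ step B v a u) \/
     (exists v, b s v /\ step B v tau u /\
        lt (n (inr (exist (fun x : state A * Act * state A =>
                              let '(t, a, s) := x in step A t a s)
                           (t, a, s) H)) v)
           (n (inr (exist (fun x : state A * Act * state A =>
                              let '(t, a, s) := x in step A t a s)
                           (t, a, s) H)) u))).

Definition image_finite {X Y : Type} (b : X -> Y -> Prop) : Prop :=
  forall s, exists l : list Y, forall u, b s u -> In u l.

(* Main.v *)
From Stdlib Require Import Arith List Relations Wellfounded Lia Classical ClassicalEpsilon.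
Require Import Defs.

Lemma dep_seq {T : Type} (P : nat -> T -> Prop) (R : nat -> T -> T -> Prop) :
  (exists x, P 0 x) -> (forall k x, P k x -> exists y, P (S k) y /\ R k x y) ->
  exists g : nat -> T, forall k, P k (g k) /\ R k (g k) (g (S k)).
Proof.
  intros H0 Hs.
  set (F := fix F (k : nat) : {x | P k x} :=
    match k return {x | P k x} with
    | 0 => constructive_indefinite_description _ H0
    | S k' => let x := F k' in
        let y := constructive_indefinite_description _ (Hs k' _ (proj2_sig x)) in
        exist _ (proj1_sig y) (proj1 (proj2_sig y))
    end).
  exists (fun k => proj1_sig (F k)).
  intro k. split.
  - exact (proj2_sig (F k)).
  - simpl. exact (proj2 (proj2_sig (constructive_indefinite_description _ (Hs k _ (proj2_sig (F k)))))).
Qed.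

Lemma fchoice {X Y : Type} (Q : X -> Y -> Prop) :
  (forall x, exists y, Q x y) -> exists f, forall x, Q x (f x).
Proof.
  intro H. exists (fun x => proj1_sig (constructive_indefinite_description _ (H x))).
  intro x. exact (proj2_sig (constructive_indefinite_description _ (H x))).
Qed.

Lemma exists_fl (h : nat -> nat) : exists fl : option nat,
  forall j, (match fl with Some M => j <= M | None => True end) <-> exists k, j <= h k.
Proof.
  destruct (classic (exists M, forall k, h k <= M)) as [[M HM]|Hnb].
  - assert (exists M', (forall k, h k <= M') /\ exists k, h k = M') as [M' [HM1 [k0 Hk0]]].
    { clear - HM. induction M as [|M IH].
      - exists 0. split; [auto|]. exists 0. specialize (HM 0). lia.
      - destruct (classic (exists k, h k = S M)) as [He|Hne].
        + exists (S M). auto.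
        + apply IH. intro k. specialize (HM k). assert (h k <> S M) by (intro; apply Hne; eauto). lia. }
    exists (Some M'). intro j. split.
    + intro. exists k0. lia.
    + intros [k Hk]. specialize (HM1 k). lia.
  - exists None. intro j. split; [|auto]. intros _.
    apply NNPP. intro Hn. apply Hnb. exists j. intro k.
    assert (~ j <= h k) by (intro; apply Hn; eauto). lia.
Qed.

Section Konig.
Context {X : Type} (Lv : nat -> X -> Prop) (E : nat -> X -> X -> Prop).
Hypothesis Hfin : forall k, exists l : list X, forall x, Lv k x -> In x l.
Hypothesis Hne : forall k, exists x, Lv k x.
Hypothesis Hpred : forall k u, Lv (S k) u -> exists v, Lv k v /\ E k v u.

Inductive path (k : nat) (v : X) : nat -> X -> Prop :=
| path_refl : path k v k v
| path_step : forall m w u, path k v m w -> E m w u -> Lv (S m) u -> path k v (S m) u.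

Lemma path_le k v m u : path k v m u -> k <= m.
Proof. induction 1; lia. Qed.

Lemma path_same k v m w : path k v m w -> m = k -> w = v.
Proof. induction 1; intros; auto. apply path_le in H. lia. Qed.

Lemma path_back : forall m u, Lv m u -> forall k, k <= m -> exists v, Lv k v /\ path k v m u.
Proof.
  induction m as [|m IH]; intros u Hu k Hk.
  - assert (k = 0) by lia. subst. exists u. split; auto. constructor.
  - destruct (PeanoNat.Nat.eq_dec k (S m)) as [->|Hk'].
    + exists u. split; auto. constructor.
    + destruct (Hpred m u Hu) as [w [Hw Hwu]].
      destruct (IH w Hw k ltac:(lia)) as [v [Hv Hp]].
      exists v. split; auto. econstructor; eauto.
Qed.

Lemma path_trunc k v m u : path k v m u -> forall m', k <= m' -> m' <= m -> exists u', path k v m' u'.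
Proof.
  induction 1 as [|m w u Hp IH He Hl]; intros m' H1 H2.
  - assert (m' = k) by lia. subst. exists v. constructor.
  - destruct (PeanoNat.Nat.eq_dec m' (S m)) as [->|]. + eauto using path_step.
    + apply IH; lia.
Qed.

Lemma path_first k v m u : path k v m u -> S k <= m ->
  exists v', Lv (S k) v' /\ E k v v' /\ path (S k) v' m u.
Proof.
  induction 1 as [|m w u Hp IH He Hl]; intros H.
  - lia.
  - destruct (le_lt_dec (S k) m) as [Hle|Hlt].
    + destruct (IH Hle) as [v' [A1 [A2 A3]]]. exists v'. repeat split; auto. econstructor; eauto.
    + assert (m = k) by (apply path_le in Hp; lia). subst.
      apply path_same in Hp; auto. subst. exists u. repeat split; auto. constructor.
Qed.

Definition Ext k v := forall m, k <= m -> exists u, path k v m u.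

Lemma bound (Q : X -> Prop) k : forall l : list X, (forall x, In x l -> Lv k x -> Q x -> ~ Ext k x) ->
  exists M, forall x, In x l -> Lv k x -> Q x -> exists m, k <= m /\ m <= M /\ ~ exists u, path k x m u.
Proof.
  induction l as [|x l IH]; intros Hl.
  - exists 0. intros x [].
  - destruct IH as [M HM]. { intros; apply Hl; simpl; auto. }
    destruct (classic (Lv k x /\ Q x)) as [[Hx Hq]|Hx].
    + assert (exists m, k <= m /\ ~ exists u, path k x m u) as [m [Hm1 Hm2]].
      { apply NNPP. intro Hn. apply (Hl x (or_introl eq_refl) Hx Hq). intros m Hm.
        apply NNPP. intro. apply Hn. eauto. }
      exists (max M m). intros y Hy Hly Hqy. destruct Hy as [->|Hy].
      * exists m. repeat split; auto; lia.
      * destruct (HM y Hy Hly Hqy) as [m' ?]. exists m'. intuition lia.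
    + exists M. intros y Hy Hly Hqy. destruct Hy as [->|Hy].
      * exfalso; auto.
      * auto.
Qed.

Lemma ext0 : exists v, Lv 0 v /\ Ext 0 v.
Proof.
  apply NNPP. intro Hno.
  destruct (Hfin 0) as [l Hl].
  destruct (bound (fun _ => True) 0 l) as [M HM].
  { intros x _ Hx _ He. apply Hno. eauto. }
  destruct (Hne M) as [u Hu].
  destruct (path_back M u Hu 0 ltac:(lia)) as [v [Hv Hp]].
  destruct (HM v (Hl v Hv) Hv I) as [m [_ [Hm Hn]]].
  apply Hn. apply (path_trunc 0 v M u Hp); lia.
Qed.

Lemma extS k v : Lv k v -> Ext k v -> exists v', (Lv (S k) v' /\ Ext (S k) v') /\ E k v v'.
Proof.
  intros Hv He. apply NNPP. intro Hno.
  destruct (Hfin (S k)) as [l Hl].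
  destruct (bound (E k v) (S k) l) as [M HM].
  { intros x _ Hx Hq Hex. apply Hno. eauto. }
  destruct (He (max M (S k)) ltac:(lia)) as [u Hp].
  destruct (path_first _ _ _ _ Hp ltac:(lia)) as [v' [Hv' [Hvv' Hp']]].
  destruct (HM v' (Hl v' Hv') Hv' Hvv') as [m [Hm1 [Hm2 Hn]]].
  apply Hn. apply (path_trunc _ _ _ _ Hp'); lia.
Qed.

Lemma konig : exists f : nat -> X, forall k, Lv k (f k) /\ E k (f k) (f (S k)).
Proof.
  destruct (dep_seq (fun k x => Lv k x /\ Ext k x) E) as [f Hf].
  - destruct ext0 as [v ?]. eauto.
  - intros k x [Hx Hex]. apply extS; auto.
  - exists f. intro k. destruct (Hf k) as [[? _] ?]. auto.
Qed.
End Konig.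

Definition upd {X : Type} (f : nat -> X) (m : nat) (x : X) : nat -> X :=
  fun j => if Nat.eqb j m then x else f j.

Section Main.
Context {Act : Type} {tau : Act} (A B : automaton tau) (b : state A -> state B -> Prop).
Context (al : frag Act (state A)).

Record dat := mkD { dw : nat -> state B; dc : nat -> Act; dlo : nat -> nat; dhi : nat -> nat }.

Definition Good (k : nat) (D : dat) : Prop :=
  start B (dw D 0) /\
  (forall j, j < dhi D k -> step B (dw D j) (dc D (S j)) (dw D (S j))) /\
  dlo D 0 = 0 /\
  (forall i, i <= k -> dlo D i <= dhi D i) /\
  (forall i, i < k -> (dlo D (S i) = dhi D i /\ fact al (S i) = tau) \/
                      (dlo D (S i) = S (dhi D i) /\ dc D (S (dhi D i)) = fact al (S i))) /\
  (forall i j, i <= k -> dlo D i <= j -> j <= dhi D i -> b (fst al i) (dw D j)) /\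
  (forall i j, i <= k -> dlo D i < j -> j <= dhi D i -> dc D j = tau).

Lemma good_lohi k D : Good k D -> forall i i', i < i' -> i' <= k -> dhi D i <= dlo D i'.
Proof.
  intros (G1&G2&G3&G4&G5&G6&G7) i i' H1 H2.
  induction i' as [|m IH]; [lia|].
  destruct (G5 m ltac:(lia)) as [[E _]|[E _]];
  (destruct (PeanoNat.Nat.eq_dec i m); [subst; lia|]);
  specialize (IH ltac:(lia) ltac:(lia)); specialize (G4 m ltac:(lia)); lia.
Qed.

Lemma good_mono k D : Good k D -> forall i i', i <= i' -> i' <= k -> dhi D i <= dhi D i'.
Proof.
  intros HG i i' H1 H2. destruct (PeanoNat.Nat.eq_dec i i'); [subst; lia|].
  pose proof (good_lohi k D HG i i' ltac:(lia) H2).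
  destruct HG as (G1&G2&G3&G4&_). specialize (G4 i' H2). lia.
Qed.

Lemma good_cover k D : Good k D -> forall j, j <= dhi D k -> exists i, i <= k /\ dlo D i <= j /\ j <= dhi D i.
Proof.
  intros HG j Hj.
  assert (forall m, m <= k -> j <= dhi D m -> exists i, i <= m /\ dlo D i <= j /\ j <= dhi D i) as H.
  { induction m as [|m IH]; intros Hm Hjm.
    - exists 0. destruct HG as (_&_&G3&_). lia.
    - destruct (le_lt_dec j (dhi D m)) as [Hle|Hlt].
      + destruct (IH ltac:(lia) Hle) as [i ?]. exists i. intuition lia.
      + exists (S m). destruct HG as (_&_&_&_&G5&_).
        destruct (G5 m ltac:(lia)) as [[E _]|[E _]]; split; lia. }
  apply (H k); lia.
Qed.

Lemma good_down1 k D : Good (S k) D -> Good k D.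
Proof.
  intro HG. pose proof (good_mono _ _ HG k (S k) ltac:(lia) ltac:(lia)).
  destruct HG as (G1&G2&G3&G4&G5&G6&G7).
  split; [auto|]. split; [intros; apply G2; lia|]. split; [auto|].
  split; [intros; apply G4; lia|]. split; [intros; apply G5; lia|].
  split; [intros; apply (G6 i); auto; lia|].
  intros; apply (G7 i); auto; lia.
Qed.

Lemma good_down k D : Good k D -> forall i, i <= k -> Good i D.
Proof.
  intros HG i Hi. induction k as [|k IH].
  - assert (i = 0) by lia. subst; auto.
  - destruct (PeanoNat.Nat.eq_dec i (S k)) as [->|]; auto.
    apply IH; [apply good_down1; auto| lia].
Qed.

Lemma good_ext k D D' : Good k D ->
  (forall i, i <= k -> dlo D' i = dlo D i /\ dhi D' i = dhi D i) ->
  (forall j, j <= dhi D k -> dw D' j = dw D j /\ dc D' j = dc D j) -> Good k D'.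
Proof.
  intros HG Hl Hw.
  pose proof (good_mono _ _ HG) as Hmo. pose proof (good_lohi _ _ HG) as Hlh.
  destruct HG as (G1&G2&G3&G4&G5&G6&G7).
  destruct (Hl k ltac:(lia)) as [_ Hk].
  split. { rewrite (proj1 (Hw 0 ltac:(lia))); auto. }
  split. { intros j Hj. rewrite Hk in Hj.
    rewrite (proj1 (Hw j ltac:(lia))), (proj2 (Hw (S j) ltac:(lia))), (proj1 (Hw (S j) ltac:(lia))).
    auto. }
  split. { rewrite (proj1 (Hl 0 ltac:(lia))); auto. }
  split. { intros i Hi. rewrite (proj1 (Hl i Hi)), (proj2 (Hl i Hi)); auto. }
  split. { intros i Hi. rewrite (proj1 (Hl (S i) ltac:(lia))), (proj2 (Hl i ltac:(lia))).
    destruct (G5 i Hi) as [?|[E1 E2]]; [left; auto|right].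
    pose proof (G4 (S i) ltac:(lia)). pose proof (Hmo (S i) k ltac:(lia) ltac:(lia)).
    rewrite (proj2 (Hw (S (dhi D i)) ltac:(lia))). auto. }
  split. { intros i j Hi H1 H2. rewrite (proj1 (Hl i Hi)) in H1. rewrite (proj2 (Hl i Hi)) in H2.
    pose proof (Hmo i k ltac:(lia) ltac:(lia)).
    rewrite (proj1 (Hw j ltac:(lia))). eauto. }
  { intros i j Hi H1 H2. rewrite (proj1 (Hl i Hi)) in H1. rewrite (proj2 (Hl i Hi)) in H2.
    pose proof (Hmo i k ltac:(lia) ltac:(lia)).
    rewrite (proj2 (Hw j ltac:(lia))). eauto. }
Qed.

Lemma good_S k D : Good k D ->
  (forall j, dhi D k <= j -> j < dhi D (S k) -> step B (dw D j) (dc D (S j)) (dw D (S j))) ->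
  dlo D (S k) <= dhi D (S k) ->
  ((dlo D (S k) = dhi D k /\ fact al (S k) = tau) \/
   (dlo D (S k) = S (dhi D k) /\ dc D (S (dhi D k)) = fact al (S k))) ->
  (forall j, dlo D (S k) <= j -> j <= dhi D (S k) -> b (fst al (S k)) (dw D j)) ->
  (forall j, dlo D (S k) < j -> j <= dhi D (S k) -> dc D j = tau) ->
  Good (S k) D.
Proof.
  intros HG H2 H4 H5 H6 H7.
  destruct HG as (G1&G2&G3&G4&G5&G6&G7).
  split; [auto|]. split.
  { intros j Hj. destruct (le_lt_dec (dhi D k) j); auto. }
  split; [auto|]. split.
  { intros i Hi. destruct (PeanoNat.Nat.eq_dec i (S k)) as [->|]; auto. apply G4; lia. }
  split.
  { intros i Hi. destruct (PeanoNat.Nat.eq_dec i k) as [->|]; auto. apply G5; lia. }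
  split.
  { intros i j Hi. destruct (PeanoNat.Nat.eq_dec i (S k)) as [->|]; auto. apply G6; lia. }
  { intros i j Hi. destruct (PeanoNat.Nat.eq_dec i (S k)) as [->|]; auto. apply G7; lia. }
Qed.


Ltac updt := unfold upd in *; simpl in *;
  repeat match goal with
  | |- context [Nat.eqb ?x ?y] => destruct (Nat.eqb_spec x y)
  | H : context [Nat.eqb ?x ?y] |- _ => destruct (Nat.eqb_spec x y)
  end.

Lemma tau_ext k D u : Good k D -> b (fst al k) u -> step B (dw D (dhi D k)) tau u ->
  Good k (mkD (upd (dw D) (S (dhi D k)) u) (upd (dc D) (S (dhi D k)) tau) (dlo D)
              (upd (dhi D) k (S (dhi D k)))).
Proof.
  intros HG Hu Hs.
  pose proof (good_mono _ _ HG) as Hmo. pose proof (good_lohi _ _ HG) as Hlh.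
  destruct HG as (G1&G2&G3&G4&G5&G6&G7).
  split. { updt; try lia; auto. }
  split. { intros j Hj. updt; subst; try lia.
    all: try (apply G2; lia).
    all: try (injection e; intro; subst; auto).
    all: try assumption. }
  split. { simpl; auto. }
  split. { intros i Hi. pose proof (G4 i Hi). updt; subst; lia. }
  split. { intros i Hi. simpl. updt; try lia.
    destruct (G5 i Hi) as [?|[E1 E2]]; [left; auto|right; split; auto].
    pose proof (G4 (S i) ltac:(lia)). pose proof (Hmo (S i) k ltac:(lia) ltac:(lia)).
    updt; try lia. auto. }
  split. { intros i j Hi H1 H2. updt; subst; auto.
    all: try (apply (G6 k); auto; lia).
    all: try (pose proof (Hmo i k ltac:(lia) ltac:(lia)); lia).
    all: try (apply (G6 i); auto; lia). }
  { intros i j Hi H1 H2. updt; subst; auto.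
    all: try (apply (G7 k); auto; lia).
    all: try (pose proof (Hmo i k ltac:(lia) ltac:(lia)); lia).
    all: try (apply (G7 i); auto; lia). }
Qed.


Definition agree (k : nat) (D D' : dat) : Prop :=
  (forall i, i <= k -> dlo D' i = dlo D i /\ dhi D' i = dhi D i) /\
  (forall j, j <= dhi D k -> dw D' j = dw D j /\ dc D' j = dc D j).

Definition Seg (k : nat) (v u : state B) : Prop := forall D, Good k D -> dw D (dhi D k) = v ->
  exists D', Good (S k) D' /\ dw D' (dhi D' (S k)) = u /\ agree k D D'.

Lemma step_ext k D u : Good k D -> step B (dw D (dhi D k)) (fact al (S k)) u ->
  b (fst al (S k)) u ->
  exists D', Good (S k) D' /\ dw D' (dhi D' (S k)) = u /\ agree k D D'.
Proof.
  intros HG Hs Hu.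
  set (h := dhi D k).
  exists (mkD (upd (dw D) (S h) u) (upd (dc D) (S h) (fact al (S k)))
              (upd (dlo D) (S k) (S h)) (upd (dhi D) (S k) (S h))).
  assert (Hag : agree k D (mkD (upd (dw D) (S h) u) (upd (dc D) (S h) (fact al (S k)))
              (upd (dlo D) (S k) (S h)) (upd (dhi D) (S k) (S h)))).
  { split; intros; updt; try lia; auto. }
  split; [|split; [updt; try lia; auto|exact Hag]].
  pose proof (good_ext k D _ HG (proj1 Hag) (proj2 Hag)) as HG'.
  apply good_S; auto; simpl.
  - intros j H1 H2. updt; try lia. subst j. exact Hs.
  - updt; lia.
  - right. updt; try lia. auto.
  - intros j H1 H2. updt; try lia. auto.
  - intros j H1 H2. updt; lia.
Qed.

Lemma stut_ext k D : Good k D -> fact al (S k) = tau -> b (fst al (S k)) (dw D (dhi D k)) ->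
  exists D', Good (S k) D' /\ dw D' (dhi D' (S k)) = dw D (dhi D k) /\ agree k D D'.
Proof.
  intros HG Ht Hu.
  set (h := dhi D k).
  exists (mkD (dw D) (dc D) (upd (dlo D) (S k) h) (upd (dhi D) (S k) h)).
  assert (Hag : agree k D (mkD (dw D) (dc D) (upd (dlo D) (S k) h) (upd (dhi D) (S k) h))).
  { split; intros; updt; try lia; auto. }
  split; [|split; [updt; try lia; auto|exact Hag]].
  pose proof (good_ext k D _ HG (proj1 Hag) (proj2 Hag)) as HG'.
  apply good_S; auto; simpl.
  - intros j H1 H2. updt; lia.
  - updt; lia.
  - left. updt; try lia. auto.
  - intros j H1 H2. updt; try lia. replace j with h by lia. auto.
  - intros j H1 H2. updt; lia.
Qed.

Lemma init_good u : start B u -> b (fst al 0) u ->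
  Good 0 (mkD (fun _ => u) (fun _ => tau) (fun _ => 0) (fun _ => 0)).
Proof.
  intros H1 H2. unfold Good; simpl.
  split; [auto|]. split; [intros; lia|]. split; [auto|]. split; [intros; lia|].
  split; [intros; lia|]. split; [|intros; lia].
  intros i j Hi _ _. assert (i = 0) by lia. subst. auto.
Qed.


Context (NS : Type) (lt : NS -> NS -> Prop) (n : norm_dom A -> state B -> NS).
Hypothesis Hbs : normed_backward_simulation A B b NS lt n.

Lemma init_exists (H : start A (fst al 0)) :
  forall u, b (fst al 0) u -> exists D, Good 0 D /\ dw D (dhi D 0) = u.
Proof.
  destruct Hbs as [[_ [_ Hwf]] [_ [Hinit _]]].
  set (x := inl (exist _ (fst al 0) H) : norm_dom A).
  intro u. induction u as [u IH] using (well_founded_ind (wf_inverse_image _ _ lt (n x) Hwf)).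
  intro Hu.
  destruct (Hinit _ H u Hu) as [Hs | [v [Hv [Hvu Hlt]]]].
  - exists (mkD (fun _ => u) (fun _ => tau) (fun _ => 0) (fun _ => 0)).
    split; [apply init_good; auto | reflexivity].
  - destruct (IH v Hlt Hv) as [D [HD HDe]].
    exists (mkD (upd (dw D) (S (dhi D 0)) u) (upd (dc D) (S (dhi D 0)) tau) (dlo D)
              (upd (dhi D) 0 (S (dhi D 0)))). split.
    + apply tau_ext; auto. rewrite HDe; auto.
    + updt; auto; lia.
Qed.

Lemma seg_exists k (H : step A (fst al k) (fact al (S k)) (fst al (S k))) :
  forall u, b (fst al (S k)) u -> exists v, b (fst al k) v /\ Seg k v u.
Proof.
  destruct Hbs as [[_ [_ Hwf]] [_ [_ Hstep]]].
  set (x := inr (exist (fun x : state A * Act * state A =>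
                              let '(t, a, s) := x in step A t a s)
                           (fst al k, fact al (S k), fst al (S k)) H) : norm_dom A).
  intro u. induction u as [u IH] using (well_founded_ind (wf_inverse_image _ _ lt (n x) Hwf)).
  intro Hu.
  destruct (Hstep _ _ _ H u Hu) as [[Hb Ht] | [[v [Hv Hvu]] | [w [Hw [Hwu Hlt]]]]].
  - exists u. split; auto. intros D HD He.
    destruct (stut_ext k D HD Ht) as [D' [? [? ?]]]. { rewrite He; auto. }
    exists D'. split; auto. split; auto. congruence.
  - exists v. split; auto. intros D HD He.
    apply step_ext; auto. rewrite He; auto.
  - destruct (IH w Hlt Hw) as [v [Hv Hseg]].
    exists v. split; auto. intros D HD He.
    destruct (Hseg D HD He) as [D1 [HD1 [He1 [Ag1 Ag2]]]].
    pose proof (good_mono _ _ HD1 k (S k) ltac:(lia) ltac:(lia)) as Hm.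
    exists (mkD (upd (dw D1) (S (dhi D1 (S k))) u) (upd (dc D1) (S (dhi D1 (S k))) tau) (dlo D1)
              (upd (dhi D1) (S k) (S (dhi D1 (S k))))). split.
    + apply tau_ext; auto. rewrite He1; auto.
    + split. { updt; auto; lia. }
      split.
      * intros i Hi. destruct (Ag1 i Hi). updt; try lia; auto.
      * intros j Hj. destruct (Ag1 k ltac:(lia)). destruct (Ag2 j Hj). updt; try lia; auto.
Qed.


Lemma idx_down {X : Type} (f : frag Act X) i i' : Index f i' -> i <= i' -> Index f i.
Proof. unfold Index. destruct (flen f); auto. lia. Qed.

Lemma rel_gen D fl : (forall i, Index al i -> Good i D) ->
  (forall j, Index (Build_frag (dw D) (dc D) fl) j <-> exists i, Index al i /\ j <= dhi D i) ->
  execution B (Build_frag (dw D) (dc D) fl) /\ R_related b al (Build_frag (dw D) (dc D) fl).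
Proof.
  intros HG Hidx.
  assert (I0 : Index al 0) by (apply (idx_down al 0 0); [unfold Index; destruct (flen al); auto; lia | lia]).
  split.
  { split.
    2:{ simpl. destruct (HG 0 I0) as [G1 _]. exact G1. }
    intros j Hj. apply Hidx in Hj. destruct Hj as [i [Hi Hj]].
      destruct (HG i Hi) as (_&G2&_). simpl. apply G2. lia. }
  exists (fun i j => Index al i /\ dlo D i <= j /\ j <= dhi D i).
  split; [|split; [|split; [|split; [|split; [|split; [|split]]]]]].
  - intros i j [Hi [H1 H2]]. split; auto. apply Hidx. eauto.
  - intros i j [Hi [H1 H2]]. destruct (HG i Hi) as (_&_&_&_&_&G6&_). simpl. apply (G6 i); auto.
  - intros i j i' j' [Hi [H1 H2]] [Hi' [H1' H2']] Hlt.
    pose proof (good_lohi _ _ (HG i' Hi') i i' Hlt ltac:(lia)). lia.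
  - intros i Hi. exists (dhi D i). destruct (HG i Hi) as (_&_&_&G4&_). pose proof (G4 i ltac:(lia)). auto.
  - intros j Hj. apply Hidx in Hj. destruct Hj as [i [Hi Hj]].
    destruct (good_cover _ _ (HG i Hi) j Hj) as [i0 [Hi0 [H1 H2]]].
    exists i0. split; auto. apply (idx_down al i0 i); auto.
  - intros i j [Hi [H1 H2]] [Hi' [H1' H2']]. simpl.
    destruct (HG (S i) Hi') as (_&_&_&_&G5&_&G7).
    destruct (G5 i ltac:(lia)) as [[E1 E2]|[E1 E2]].
    + rewrite E2. symmetry. destruct (le_lt_dec (dlo D (S i)) j).
      * apply (G7 (S i)); auto; lia.
      * destruct (HG i Hi) as (_&_&_&_&_&_&G7'). apply (G7' i); auto; lia.
    + assert (j = dhi D i) by lia. subst. auto.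
  - intros i j [Hi [H1 H2]] [Hi' [H1' H2']].
    destruct (HG (S i) Hi') as (_&_&_&_&G5&_&G7).
    destruct (G5 i ltac:(lia)) as [[E1 E2]|[E1 E2]]; auto; lia.
  - intros i j [Hi [H1 H2]] [Hi' [H1' H2']]. simpl.
    destruct (HG i Hi) as (_&_&_&_&_&_&G7). apply (G7 i); auto; lia.
Qed.


Lemma fin_part k : execution A al -> flen al = Some k ->
  exists al', execution B al' /\ is_finite al' /\ R_related b al al'.
Proof.
  intros [Hex Hst] Hk.
  pose proof Hbs as (_&Htot&_).
  assert (Hch : forall m, m <= k -> forall u, b (fst al m) u -> exists D, Good m D /\ dw D (dhi D m) = u).
  { induction m as [|m IH]; intros Hm u Hu.
    - apply init_exists; auto.
    - assert (Hs : step A (fst al m) (fact al (S m)) (fst al (S m))).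
      { apply Hex. unfold Index. rewrite Hk. lia. }
      destruct (seg_exists m Hs u Hu) as [v [Hv Hseg]].
      destruct (IH ltac:(lia) v Hv) as [D [HD HDe]].
      destruct (Hseg D HD HDe) as [D' [? [? _]]]. eauto. }
  destruct (Htot (fst al k)) as [u Hu].
  destruct (Hch k (le_n _) u Hu) as [D [HD _]].
  destruct (rel_gen D (Some (dhi D k))) as [H1 H2].
  - intros i Hi. unfold Index in Hi. rewrite Hk in Hi. apply (good_down k); auto.
  - intro j. unfold Index. rewrite Hk. simpl. split.
    + intro. exists k. split; auto.
    + intros [i [Hi Hj]]. pose proof (good_mono _ _ HD i k Hi (le_n _)). lia.
  - exists (Build_frag (dw D) (dc D) (Some (dhi D k))). split; auto. split; auto.
    exists (dhi D k). reflexivity.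
Qed.

Lemma inf_part : image_finite b -> execution A al -> flen al = None ->
  exists al', execution B al' /\ R_related b al al'.
Proof.
  intros Hif [Hex Hst] Hk.
  pose proof Hbs as (_&Htot&_).
  assert (Hstep : forall k, step A (fst al k) (fact al (S k)) (fst al (S k))).
  { intro k. apply Hex. unfold Index. rewrite Hk. auto. }
  destruct (konig (fun k u => b (fst al k) u) Seg) as [f Hf].
  { intro k. apply Hif. }
  { intro k. apply Htot. }
  { intros k u Hu. apply (seg_exists k (Hstep k) u Hu). }
  destruct (dep_seq (fun k D => Good k D /\ dw D (dhi D k) = f k) agree) as [g Hg].
  { apply init_exists; auto. apply Hf. }
  { intros k D [HD HDe]. destruct (proj2 (Hf k) D HD HDe) as [D' [? [? ?]]]. eauto. }
  assert (agt : forall k k', k <= k' ->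
    (forall i, i <= k -> dlo (g k') i = dlo (g k) i /\ dhi (g k') i = dhi (g k) i) /\
    (forall j, j <= dhi (g k) k -> dw (g k') j = dw (g k) j /\ dc (g k') j = dc (g k) j)).
  { intros k k' Hkk. induction Hkk as [|k' Hkk [IH1 IH2]].
    - split; auto.
    - destruct (Hg k') as [[HGk _] [Ag1 Ag2]].
      split.
      + intros i Hi. destruct (Ag1 i ltac:(lia)). destruct (IH1 i Hi). split; congruence.
      + intros j Hj. destruct (IH1 k (le_n _)) as [_ Eh].
        pose proof (good_mono _ _ HGk k k' Hkk (le_n _)).
        destruct (Ag2 j ltac:(lia)). destruct (IH2 j Hj). split; congruence. }
  destruct (fchoice (fun j k => (exists k', j <= dhi (g k') k') -> j <= dhi (g k) k)) as [K HK].
  { intro j. destruct (classic (exists k', j <= dhi (g k') k')) as [[k' Hk']|Hn].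
    - exists k'. auto.
    - exists 0. intro; contradiction. }
  set (Dg := mkD (fun j => dw (g (K j)) j) (fun j => dc (g (K j)) j)
                 (fun i => dlo (g i) i) (fun i => dhi (g i) i)).
  assert (HG : forall k, Good k Dg).
  { intro k. destruct (Hg k) as [[HGk _] _].
    apply (good_ext k (g k)); auto.
    - intros i Hi. simpl. destruct (agt i k Hi) as [A1 _]. destruct (A1 i (le_n _)). split; auto.
    - intros j Hj. simpl. pose proof (HK j (ex_intro _ k Hj)) as HKj.
      destruct (le_lt_dec (K j) k) as [Hle|Hlt].
      + destruct (agt (K j) k Hle) as [_ A2]. destruct (A2 j HKj). split; auto.
      + destruct (agt k (K j) ltac:(lia)) as [_ A2]. destruct (A2 j Hj). split; auto. }
  destruct (exists_fl (dhi Dg)) as [fl Hfl].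
  destruct (rel_gen Dg fl) as [H1 H2].
  - intros i _. apply HG.
  - intro j. unfold Index at 2. rewrite Hk. unfold Index. simpl. rewrite Hfl. split.
    + intros [k Hk']. exists k. auto.
    + intros [k [_ Hk']]. exists k. exact Hk'.
  - eexists. split; eauto.
Qed.

End Main.

Theorem mainTheorem2 (Act : Type) (tau : Act) (A B : automaton tau)
  (b : state A -> state B -> Prop) (S : Type) (lt : S -> S -> Prop)
  (n : norm_dom A -> state B -> S) :
  normed_backward_simulation A B b S lt n ->
  fin_exec_corr A B b /\ (image_finite b -> exec_corr A B b).
Proof.
  intro Hbs. split.
  - intros al Hex [k Hk]. exact (fin_part A B b al S lt n Hbs k Hex Hk).
  - intros Hif al Hex. destruct (flen al) as [k|] eqn:Hk.
    + destruct (fin_part A B b al S lt n Hbs k Hex Hk) as [al' [? [? ?]]]. eauto.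
    + exact (inf_part A B b al S lt n Hbs Hif Hex Hk).
Qed.
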